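(* Let $\rho\in(0,1]$, let $M$ be a finite set, and let $(S_i)_{i\in I}$ be a nonempty family (with $I$ finite) of subsets of $M$ such that $|S_i|\geq\rho|M|$ for all $i\in I$. Set $k(\rho):=\lceil\rho^{-1}\rceil+1$ and $t(\rho):=\rho/\Delta_{\lceil\rho^{-1}\rceil}$, where $\Delta_n:=\frac12 n(n+1)$. Then: (1) If $J\subseteq I$ with $|J|\geq k(\rho)$, then there exist distinct $i,j\in J$ with $|S_i\cap S_j|\geq t(\rho)|M|$. (2) There exists $i\in I$ such that for at least $\frac{|I|-(k(\rho)-1)}{k(\rho)-1}$ many $j\in I\setminus\{i\}$ we have $|S_i\cap S_j|\geq t(\rho)|M|$. (3) If $|I|\geq 2(k(\rho)-1)$, then there exists $i\in I$ such that for at least $\frac{|I|}{2(k(\rho)-1)}$ many $j\in I\setminus\{i\}$ we have $|S_i\cap S_j|\geq t(\rho)|M|$. *)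

(* Defs.v *)
From HB Require Import structures.
From mathcomp Require Import all_boot all_order all_algebra.
Set Implicit Arguments. Unset Strict Implicit. Unset Printing Implicit Defensive.
Import Order.TTheory GRing.Theory Num.Theory.
Local Open Scope ring_scope.

Definition ceil_inv {R : archiRealFieldType} (rho : R) : nat :=
  `|Num.ceil (rho^-1)|%N.

Definition kk {R : archiRealFieldType} (rho : R) : nat := (ceil_inv rho).+1.

Definition Delta {R : archiRealFieldType} (n : nat) : R :=
  (n * n.+1)%:R / 2%:R.

Definition tt {R : archiRealFieldType} (rho : R) : R :=
  rho / Delta (ceil_inv rho).

(* Main.v *)
Require Import Defs.
From HB Require Import structures.
From mathcomp Require Import all_boot all_order all_algebra.
From mathcomp Require Import zify ring lra.
Import Order.TTheory GRing.Theory Num.Theory.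
Set Implicit Arguments. Unset Strict Implicit.
Lemma card_sumb (M : finType) (A : {set M}) : #|A| = \sum_x (x \in A : nat).
Proof. rewrite -sum1_card big_mkcond /=; apply: eq_bigr => x _; by case: (x \in A). Qed.

Lemma count_ineq (M I : finType) (S : I -> {set M}) (J : {set I}) :
  2 * \sum_(i in J) #|S i| <=
  \sum_(i in J) \sum_(j in J | j != i) #|S i :&: S j| + 2 * #|M|.
Proof.
set c := fun x : M => \sum_(i in J) (x \in S i : nat).
have hP : \sum_(i in J) #|S i| = \sum_x c x.
  rewrite /c exchange_big /=; apply: eq_bigr => i _; exact: card_sumb.
have hQ : \sum_(i in J) \sum_(j in J) #|S i :&: S j| = \sum_x c x * c x.
  rewrite /c.
  transitivity (\sum_(i in J) \sum_(j in J) \sum_x ((x \in S i : nat) * (x \in S j : nat))).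
    apply: eq_bigr => i _; apply: eq_bigr => j _; rewrite card_sumb.
    by apply: eq_bigr => x _; rewrite inE; case: (x \in S i); case: (x \in S j).
  under [RHS]eq_bigr => x _ do rewrite big_distrlr /=.
  under eq_bigr => i _ do rewrite exchange_big /=.
  by rewrite exchange_big.
have hQ2 : \sum_(i in J) \sum_(j in J) #|S i :&: S j| =
   \sum_(i in J) #|S i| + \sum_(i in J) \sum_(j in J | j != i) #|S i :&: S j|.
  rewrite -big_split /=; apply: eq_bigr => i iJ.
  by rewrite (bigD1 i) //= setIid.
have h3 : 3 * \sum_x c x <= \sum_x c x * c x + 2 * #|M|.
  rewrite -sum1_card !big_distrr -big_split /=; apply: leq_sum => x _.
  rewrite muln1; move: (c x) => k; case: k => [|[|k]] //; nia.
rewrite hP; move: hQ2; rewrite hQ hP => hQ2; clearbody c; lia.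
Qed.
Lemma greedy (I : finType) (e : rel I) (esym : forall a b, e a b = e b a) (D : nat)
  (hD : forall i, #|[set j | (j != i) && e i j]| <= D) (U : {set I}) :
  exists A : {set I}, [/\ A \subset U,
     (forall a b, a \in A -> b \in A -> a != b -> ~~ e a b) & #|U| <= D.+1 * #|A|].
Proof.
have [k hk] : exists k, #|U| < k by exists #|U|.+1.
elim: k U hk => [|k IH] U hU; first by [].
case: (set_0Vmem U) => [->|[x xU]].
  by exists set0; rewrite sub0set cards0; split => // a b; rewrite inE.
set N := [set j | (j != x) && e x j].
set U' := U :\: (x |: N).
have hxU' : x \notin U' by rewrite !inE eqxx.
have cU : #|U| = #|U :&: (x |: N)| + #|U'| by rewrite cardsID.
have cxN : #|U :&: (x |: N)| <= D.+1.
  apply: leq_trans (subset_leq_card (subsetIr _ _)) _.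
  rewrite cardsU1; have := hD x; rewrite -/N; case: (x \in N) => /=; lia.
have hlt : #|U'| < k.
  have : 0 < #|U :&: (x |: N)|.
    by apply/card_gt0P; exists x; rewrite !inE xU eqxx.
  lia.
have [A' [sA' indA' cA']] := IH U' hlt.
have xA' : x \notin A' by apply: contra hxU'; apply: (subsetP sA').
exists (x |: A'); split.
- rewrite subUset sub1set xU; apply: subset_trans sA' _; exact: subsetDl.
- have hind : forall b, b \in A' -> ~~ e x b.
    move=> b /(subsetP sA'); rewrite !inE negb_or => /andP [/andP [bx bN] _].
    by move: bN; rewrite bx /=.
  move=> a b; rewrite !inE => /orP [/eqP ->|aA] /orP [/eqP ->|bA] ab.
  + by rewrite eqxx in ab.
  + exact: hind.
  + by rewrite esym; apply: hind.
  + exact: indA'.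
- rewrite cardsU1 xA'; lia.
Qed.
Local Open Scope ring_scope.
Lemma n_facts (R : archiRealFieldType) (rho : R) : 0 < rho ->
  (1 <= ceil_inv rho)%N /\ 1 <= (ceil_inv rho)%:R * rho /\
  ((ceil_inv rho) * (ceil_inv rho).+1)%:R * tt rho = 2 * rho.
Proof.
move=> r0.
have ci : (ceil_inv rho)%:R = (Num.ceil (rho^-1))%:~R :> R.
  rewrite /ceil_inv natr_absz ger0_norm // ceil_ge0.
  have : 0 < rho^-1 by rewrite invr_gt0. lra.
have n1 : (1 <= ceil_inv rho)%N.
  rewrite /ceil_inv; have : 0 < Num.ceil (rho^-1) by rewrite ceil_gt0 invr_gt0.
  lia.
split; first exact n1.
split.
  rewrite ci; have := ceil_ge (rho^-1) => h.
  have hne : rho != 0 by rewrite gt_eqF.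
  by rewrite -{1}(mulVf hne) ler_pM2r.
rewrite /tt /Delta.
have : (0 < (ceil_inv rho * (ceil_inv rho).+1)%:R :> R) by rewrite ltr0n muln_gt0 n1.
move=> hp. field.
have h1 : (0 < (ceil_inv rho)%:R :> R) by rewrite ltr0n.
apply/andP; split; apply/negP; move/eqP; lra.
Qed.

Lemma part1_exact (R : archiRealFieldType) (rho : R) (M I : finType)
  (S : I -> {set M}) (hrho0 : 0 < rho)
  (hS : forall i : I, rho * #|M|%:R <= #|S i|%:R) (J : {set I}) :
  #|J| = (ceil_inv rho).+1 ->
  exists i j : I, [/\ i \in J, j \in J, i != j &
                         tt rho * #|M|%:R <= #|S i :&: S j|%:R].
Proof.
move=> hJ.
have [n1 [nr ht]] := @n_facts R rho hrho0.
set n := ceil_inv rho in n1 nr ht hJ.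
set m := #|M| in hS *.
case: (boolP [exists i in J, exists j in J, (i != j) && (tt rho * m%:R <= #|S i :&: S j|%:R)]).
  move/existsP => [i /andP [iJ /existsP [j /andP [jJ /andP [ij h]]]]].
  by exists i, j.
move=> /negP hn; exfalso.
have hlt : forall i j, i \in J -> j \in J -> i != j -> #|S i :&: S j|%:R < tt rho * m%:R.
  move=> i j iJ jJ ij; rewrite ltNge; apply/negP => h; apply: hn.
  apply/existsP; exists i; rewrite iJ /=; apply/existsP; exists j; by rewrite jJ ij h.
have hJ1 : (1 < #|J|)%N by rewrite hJ ltnS.
have [i0 [j0 [i0J j0J ij0]]] := card_gt1P hJ1.
have hm : 0 < m%:R :> R.
  have := hlt _ _ i0J j0J ij0; rewrite ltr0n lt0n; apply: contraLR.
  rewrite negbK => /eqP ->; rewrite mulr0 ltNge negbK ler0n //.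
have hc := @count_ineq M I S J.
set off := (\sum_(i in J) \sum_(j in J | j != i) #|S i :&: S j|)%N in hc.
set P := (\sum_(i in J) #|S i|)%N in hc.
have hc' : 2 * P%:R <= off%:R + 2 * m%:R :> R.
  have := hc; rewrite -(ler_nat R) natrD !natrM. done.
have hP : (n.+1)%:R * (rho * m%:R) <= P%:R.
  rewrite /P natr_sum.
  apply: le_trans (ler_sum _ (fun i _ => hS i)).
  by rewrite sumr_const hJ mulr_natl.
have hoff : off%:R < (n * n.+1)%:R * tt rho * m%:R.
  rewrite /off natr_sum; under eq_bigr => i _ do rewrite natr_sum.
  have e : forall i, i \in J -> \sum_(j in J | j != i) (#|S i :&: S j|)%:R
             = \sum_(j in J :\ i) (#|S i :&: S j|%:R : R).
    move=> i iJ; apply: eq_bigl => j; by rewrite in_setD1 andbC.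
  rewrite (eq_bigr _ (fun i iJ => e i iJ)).
  have -> : (n * n.+1)%:R * tt rho * m%:R = \sum_(i in J) \sum_(j in J :\ i) (tt rho * m%:R).
    rewrite (eq_bigr (fun _ => tt rho * m%:R *+ n)); last first.
      move=> i iJ; rewrite sumr_const; congr (_ *+ _).
      by have := cardsD1 i J; rewrite iJ hJ add1n => -[].
    rewrite sumr_const hJ -mulrnA -mulr_natl; ring.
  apply: ltr_sum.
    by apply/hasP; exists i0; [rewrite mem_index_enum | ].
  move=> i iJ; apply: ltr_sum.
    have : (0 < #|J :\ i|)%N by have := cardsD1 i J; rewrite iJ hJ; lia.
    case/card_gt0P => k kJ; apply/hasP; exists k => //; exact: mem_index_enum.
  move=> j; rewrite in_setD1 => /andP [ji jJ]; apply: hlt => //; by rewrite eq_sym.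
have : 0 <= (n%:R * rho - 1) * m%:R by rewrite mulr_ge0 // ?subr_ge0 // ltW.
move: hc' hP hoff; rewrite ht. nra.
Qed.

Lemma subset_card_exists (I : finType) (J : {set I}) (k : nat) :
  (k <= #|J|)%N -> exists J' : {set I}, J' \subset J /\ #|J'| = k.
Proof.
elim: k => [|k IH] hk.
  by exists set0; rewrite sub0set cards0.
have [J' [sJ cJ]] := IH (ltnW hk).
have : (0 < #|J :\: J'|)%N.
  rewrite cardsD (setIidPr sJ) cJ; lia.
case/card_gt0P => x; rewrite inE => /andP [xJ' xJ].
exists (x |: J'); split.
  by rewrite subUset sub1set xJ sJ.
by rewrite cardsU1 xJ' cJ.
Qed.

Unset Implicit Arguments.
Theorem lemma4 (R : archiRealFieldType) (rho : R) (M I : finType)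
  (S : I -> {set M})
  (hrho0 : 0 < rho) (hrho1 : rho <= 1)
  (hI : (0 < #|I|)%N)
  (hS : forall i : I, rho * #|M|%:R <= #|S i|%:R) :
  (forall J : {set I}, (kk rho <= #|J|)%N ->
     exists i j : I, [/\ i \in J, j \in J, i != j &
                         tt rho * #|M|%:R <= #|S i :&: S j|%:R])
  /\
  (exists i : I,
     (#|I|%:R - (kk rho).-1%:R) / (kk rho).-1%:R
       <= (#|[set j : I | (j != i) && (tt rho * #|M|%:R <= #|S i :&: S j|%:R :> R)%R]|%:R :> R))
  /\
  ((2 * (kk rho).-1 <= #|I|)%N ->
   exists i : I,
     #|I|%:R / (2 * (kk rho).-1)%:R
       <= (#|[set j : I | (j != i) && (tt rho * #|M|%:R <= #|S i :&: S j|%:R :> R)%R]|%:R :> R)).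
Proof.
have [n1 [_ _]] := @n_facts R rho hrho0.
have P1 : forall J : {set I}, (kk rho <= #|J|)%N ->
     exists i j : I, [/\ i \in J, j \in J, i != j &
                         tt rho * #|M|%:R <= #|S i :&: S j|%:R].
  move=> J hJ.
  have [J' [sJ cJ]] := subset_card_exists hJ.
  have [i [j [iJ jJ ij h]]] := part1_exact hrho0 hS cJ.
  by exists i, j; split => //; apply: (subsetP sJ).
rewrite /kk /=.
set n := ceil_inv rho in n1 P1 *.
set good := fun i j => (tt rho * #|M|%:R <= #|S i :&: S j|%:R :> R).
have esym : forall a b, good a b = good b a by move=> a b; rewrite /good setIC.
set deg := fun i => #|[set j : I | (j != i) && good i j]|.
have [i0 _] := card_gt0P hI.
have [imax _ hmax] := @arg_maxnP I i0 predT deg isT.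
have hD : forall i, (deg i <= deg imax)%N by move=> i; apply: hmax.
have [A [_ indA cA]] := greedy esym hD [set: I].
have An : (#|A| <= n)%N.
  rewrite leqNgt; apply/negP => hA.
  have [a [b [aA bA ab h]]] := P1 A hA.
  by move: (indA a b aA bA ab); rewrite /good h.
rewrite cardsT in cA.
have key : (#|I| <= (deg imax).+1 * n)%N.
  apply: leq_trans cA _; exact: leq_mul.
have hn : (0 < n%:R :> R) by rewrite ltr0n.
have P2 : (#|I|%:R - n%:R) / n%:R <= (deg imax)%:R :> R.
  rewrite ler_pdivrMr //.
  have : (#|I|%:R <= ((deg imax).+1 * n)%:R :> R) by rewrite ler_nat.
  rewrite natrM -addn1 natrD; lra.
split => //; split; first by exists imax.
move=> h2; exists imax; apply: le_trans P2.
have e : (#|I|%:R - n%:R) / n%:R = #|I|%:R / (2 * n)%:R + (#|I|%:R - (2 * n)%:R) / (2 * n)%:R :> R.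
  rewrite natrM; field; apply/negP => /eqP; lra.
rewrite e lerDl divr_ge0 // subr_ge0 ler_nat; by [].
Qed.
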